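(* In coordinates $(t,r,\theta,\phi)$ take the coframe $\mathbf h^1=A_1(t,r)dt$, $\mathbf h^2=A_2(t,r)dr$, $\mathbf h^3=A_3(t,r)d\theta$, $\mathbf h^4=A_3(t,r)\sin\theta\,d\phi$ and a metric-compatible connection whose only non-zero components (up to $\omega_{abc}=-\omega_{bac}$) are $\omega_{341}=W_1$, $\omega_{342}=W_2$, $\omega_{233}=\omega_{244}=W_3$, $\omega_{234}=-\omega_{243}=W_4$, $\omega_{121}=W_5$, $\omega_{122}=W_6$, $\omega_{133}=\omega_{144}=W_7$, $\omega_{134}=-\omega_{143}=W_8$, $\omega_{344}=-\frac{\cos\theta}{A_3\sin\theta}$, with $W_i=W_i(t,r)$ (the most general spherically symmetric Riemann-Cartan connection). Then this connection has vanishing curvature (so the geometry is a spherically symmetric teleparallel geometry) if and only if there exist functions $\chi(t,r)$ and $\psi(t,r)$ such that $$W_1=-\frac{\partial_t\chi}{A_1},\; W_2=-\frac{\partial_r\chi}{A_2},\; W_3=\frac{\cosh\psi\cos\chi}{A_3},\; W_4=\frac{\cosh\psi\sin\chi}{A_3},$$ $$W_5=-\frac{\partial_t\psi}{A_1},\; W_6=-\frac{\partial_r\psi}{A_2},\; W_7=\frac{\sinh\psi\cos\chi}{A_3},\; W_8=\frac{\sinh\psi\sin\chi}{A_3}.$$ In particular every spherically symmetric teleparallel geometry is specified by the five functions $A_1,A_2,A_3,\chi,\psi$ of $(t,r)$.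
   Context: Frame indices in $\{1,2,3,4\}$, $\eta=\mathrm{diag}(-1,1,1,1)$, $\omega_{abc}=\eta_{ad}\omega^d{}_{bc}$, connection one-form $\boldsymbol\omega^a{}_b=\omega^a{}_{bc}\mathbf h^c$, dual frame $\mathbf h_a=h_a{}^\mu\partial_\mu$. Curvature: $R^a{}_{bcd}=h_c{}^\mu\partial_\mu\omega^a{}_{bd}-h_d{}^\nu\partial_\nu\omega^a{}_{bc}+\omega^a{}_{fc}\omega^f{}_{bd}-\omega^a{}_{fd}\omega^f{}_{bc}$. A teleparallel geometry is one with $R^a{}_{bcd}=0$ for a metric-compatible connection. *)

(* Defs.v *)
From Stdlib Require Import Reals List.
From Coquelicot Require Import Coquelicot.
Import ListNotations.
Open Scope R_scope.

(* iterated partial derivatives: true = d/dt, false = d/dr (innermost applied last in list) *)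
Fixpoint iterD (l : list bool) (f : R -> R -> R) : R -> R -> R :=
  match l with
  | nil => f
  | b :: l' =>
      let g := iterD l' f in
      if b then (fun t r => Derive (fun s => g s r) t)
           else (fun t r => Derive (fun s => g t s) r)
  end.

Definition smooth2 (f : R -> R -> R) : Prop :=
  forall l : list bool, forall t r : R,
    ex_derive (fun s => iterD l f s r) t /\
    ex_derive (fun s => iterD l f t s) r /\
    continuous (fun p : R * R => iterD l f (fst p) (snd p)) (t, r).

Definition dt (f : R -> R -> R) (t r : R) : R := Derive (fun s => f s r) t.
Definition dr (f : R -> R -> R) (t r : R) : R := Derive (fun s => f t s) r.

(* ---------- 4d fields; coordinates x^1=t, x^2=r, x^3=theta, x^4=phi ---------- *)
Definition fld := R -> R -> R -> R -> R.

Definition pd (mu : nat) (f : fld) : fld := fun t r th ph =>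
  match mu with
  | 1%nat => Derive (fun s => f s r th ph) t
  | 2%nat => Derive (fun s => f t s th ph) r
  | 3%nat => Derive (fun s => f t r s ph) th
  | _ => Derive (fun s => f t r th s) ph
  end.

Definition idx : list nat := [1%nat; 2%nat; 3%nat; 4%nat].
Definition sum4 (F : nat -> R) : R := fold_right Rplus 0 (map F idx).

(* Minkowski metric eta = diag(-1,1,1,1) (its own inverse) *)
Definition eta (a : nat) : R := match a with 1%nat => -1 | _ => 1 end.

Section Geometry.
Variables (A1 A2 A3 : R -> R -> R).

Definition cof (a mu : nat) : fld := fun t r th ph =>
  match a, mu with
  | 1%nat, 1%nat => A1 t r
  | 2%nat, 2%nat => A2 t r
  | 3%nat, 3%nat => A3 t r
  | 4%nat, 4%nat => A3 t r * sin th
  | _, _ => 0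
  end.

Definition fr (a mu : nat) : fld := fun t r th ph =>
  match a, mu with
  | 1%nat, 1%nat => / A1 t r
  | 2%nat, 2%nat => / A2 t r
  | 3%nat, 3%nat => / A3 t r
  | 4%nat, 4%nat => / (A3 t r * sin th)
  | _, _ => 0
  end.

Variables (W1 W2 W3 W4 W5 W6 W7 W8 : R -> R -> R).

Definition omL (a b c : nat) : fld := fun t r th ph =>
  match a, b, c with
  | 3%nat, 4%nat, 1%nat => W1 t r
  | 4%nat, 3%nat, 1%nat => - W1 t r
  | 3%nat, 4%nat, 2%nat => W2 t r
  | 4%nat, 3%nat, 2%nat => - W2 t r
  | 2%nat, 3%nat, 3%nat => W3 t r
  | 3%nat, 2%nat, 3%nat => - W3 t r
  | 2%nat, 4%nat, 4%nat => W3 t r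
  | 4%nat, 2%nat, 4%nat => - W3 t r
  | 2%nat, 3%nat, 4%nat => W4 t r
  | 3%nat, 2%nat, 4%nat => - W4 t r
  | 2%nat, 4%nat, 3%nat => - W4 t r
  | 4%nat, 2%nat, 3%nat => W4 t r
  | 1%nat, 2%nat, 1%nat => W5 t r
  | 2%nat, 1%nat, 1%nat => - W5 t r
  | 1%nat, 2%nat, 2%nat => W6 t r
  | 2%nat, 1%nat, 2%nat => - W6 t r
  | 1%nat, 3%nat, 3%nat => W7 t r
  | 3%nat, 1%nat, 3%nat => - W7 t r
  | 1%nat, 4%nat, 4%nat => W7 t r
  | 4%nat, 1%nat, 4%nat => - W7 t r
  | 1%nat, 3%nat, 4%nat => W8 t r
  | 3%nat, 1%nat, 4%nat => - W8 t r
  | 1%nat, 4%nat, 3%nat => - W8 t r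
  | 4%nat, 1%nat, 3%nat => W8 t r
  | 3%nat, 4%nat, 4%nat => - cos th / (A3 t r * sin th)
  | 4%nat, 3%nat, 4%nat => cos th / (A3 t r * sin th)
  | _, _, _ => 0
  end.

(* omega^a_{bc} = eta^{ad} omega_{dbc} *)
Definition omU (a b c : nat) : fld := fun t r th ph => eta a * omL a b c t r th ph.

(* connection one-form omega^a_b = omega^a_{bc} h^c, coordinate components *)
Definition om1 (a b mu : nat) : fld := fun t r th ph =>
  sum4 (fun c => omU a b c t r th ph * cof c mu t r th ph).

(* curvature two-form R^a_b = d omega^a_b + omega^a_f /\ omega^f_b, coordinate comps *)
Definition curvC (a b mu nu : nat) : fld := fun t r th ph =>
  pd mu (om1 a b nu) t r th ph - pd nu (om1 a b mu) t r th ph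
  + sum4 (fun f => om1 a f mu t r th ph * om1 f b nu t r th ph
                 - om1 a f nu t r th ph * om1 f b mu t r th ph).

Definition curv (a b c d : nat) : fld := fun t r th ph =>
  sum4 (fun mu => sum4 (fun nu =>
    fr c mu t r th ph * fr d nu t r th ph * curvC a b mu nu t r th ph)).

Definition flat : Prop :=
  forall a b c d : nat, In a idx -> In b idx -> In c idx -> In d idx ->
  forall t r th ph : R, 0 < th < PI -> curv a b c d t r th ph = 0.

End Geometry.

(* Main.v *)
Require Import Defs.
From Stdlib Require Import Reals List Lra Lia.
From Coquelicot Require Import Coquelicot.
Import ListNotations.
Open Scope R_scope.

Lemma iterD_app l b f : iterD (l ++ [b]) f = iterD l (iterD [b] f).
Proof. induction l as [|x l IH]; simpl; [reflexivity| rewrite IH; reflexivity]. Qed.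

Lemma iterD_ext l f g : (forall t r, f t r = g t r) -> forall t r, iterD l f t r = iterD l g t r.
Proof.
  intros H; induction l as [|x l IH]; intros t r; simpl; [apply H|].
  destruct x; apply Derive_ext; intros; apply IH.
Qed.

Definition smn (n : nat) (f : R -> R -> R) : Prop :=
  forall l, (length l <= n)%nat -> forall t r,
    ex_derive (fun s => iterD l f s r) t /\
    ex_derive (fun s => iterD l f t s) r /\
    continuous (fun p : R * R => iterD l f (fst p) (snd p)) (t, r).

Lemma smooth2_smn f : smooth2 f <-> forall n, smn n f.
Proof.
  split.
  - intros H n l _ t r; apply H.
  - intros H l t r; apply (H (length l) l (le_n _)).
Qed.

Lemma smn_ext n f g : (forall t r, f t r = g t r) -> smn n f -> smn n g.
Proof.
  intros E H l Hl t r; destruct (H l Hl t r) as (H1 & H2 & H3); repeat split.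
  - eapply ex_derive_ext; [|exact H1]; intros; simpl; apply iterD_ext; auto.
  - eapply ex_derive_ext; [|exact H2]; intros; simpl; apply iterD_ext; auto.
  - eapply continuous_ext; [|exact H3]; intros; simpl; apply iterD_ext; auto.
Qed.

Lemma smn_le n m f : (m <= n)%nat -> smn n f -> smn m f.
Proof. intros Hle H l Hl; apply H; lia. Qed.

Lemma smn_D n b f : smn (S n) f -> smn n (iterD [b] f).
Proof.
  intros H l Hl t r. rewrite <- iterD_app. apply H. rewrite length_app; simpl; lia.
Qed.

Lemma smn_S n f : smn 0 f -> smn n (iterD [true] f) -> smn n (iterD [false] f) -> smn (S n) f.
Proof.
  intros H0 Ht Hr l Hl t r.
  destruct l as [|x l'] using rev_ind.
  - apply H0; simpl; lia.
  - rewrite length_app in Hl; simpl in Hl.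
    rewrite iterD_app. destruct x; [apply Ht | apply Hr]; lia.
Qed.

Lemma smn0 f : (forall t r, ex_derive (fun s => f s r) t /\ ex_derive (fun s => f t s) r /\
   continuous (fun p : R * R => f (fst p) (snd p)) (t, r)) -> smn 0 f.
Proof.
  intros H l Hl t r. destruct l; [|simpl in Hl; lia]. apply H.
Qed.

Lemma smn0_e f t r : smn 0 f -> ex_derive (fun s => f s r) t /\ ex_derive (fun s => f t s) r /\
   continuous (fun p : R * R => f (fst p) (snd p)) (t, r).
Proof. intros H; apply (H nil (le_n _)). Qed.

Lemma smn_plus0 f g : smn 0 f -> smn 0 g -> smn 0 (fun t r => f t r + g t r).
Proof.
  intros Hf Hg; apply smn0; intros t r.
  destruct (smn0_e f t r Hf) as (a1&a2&a3); destruct (smn0_e g t r Hg) as (b1&b2&b3).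
  repeat split.
  + apply (ex_derive_plus (fun s => f s r) (fun s => g s r)); auto.
  + apply (ex_derive_plus (fun s => f t s) (fun s => g t s)); auto.
  + apply (continuous_plus (fun p : R*R => f (fst p) (snd p)) (fun p : R*R => g (fst p) (snd p))); auto.
Qed.

Lemma smn_plus n : forall f g, smn n f -> smn n g -> smn n (fun t r => f t r + g t r).
Proof.
  induction n as [|n IH]; intros f g Hf Hg.
  - apply smn_plus0; auto.
  - assert (H0f := smn_le _ _ _ (le_0_n (S n)) Hf).
    assert (H0g := smn_le _ _ _ (le_0_n (S n)) Hg).
    apply smn_S.
    + apply (smn_plus0 _ _ H0f H0g).
    + apply smn_ext with (fun t r => iterD [true] f t r + iterD [true] g t r).
      { intros t r; simpl. rewrite Derive_plus; auto.
        apply (smn0_e f t r H0f). apply (smn0_e g t r H0g). }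
      apply IH; apply smn_D; auto.
    + apply smn_ext with (fun t r => iterD [false] f t r + iterD [false] g t r).
      { intros t r; simpl. rewrite Derive_plus; auto.
        apply (smn0_e f t r H0f). apply (smn0_e g t r H0g). }
      apply IH; apply smn_D; auto.
Qed.

Lemma smn_mult0 f g : smn 0 f -> smn 0 g -> smn 0 (fun t r => f t r * g t r).
Proof.
  intros Hf Hg; apply smn0; intros t r.
  destruct (smn0_e f t r Hf) as (a1&a2&a3); destruct (smn0_e g t r Hg) as (b1&b2&b3).
  repeat split.
  + apply (ex_derive_mult (fun s => f s r) (fun s => g s r)); auto.
  + apply (ex_derive_mult (fun s => f t s) (fun s => g t s)); auto.
  + apply (continuous_mult (fun p : R*R => f (fst p) (snd p)) (fun p : R*R => g (fst p) (snd p))); auto.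
Qed.

Lemma smn_mult n : forall f g, smn n f -> smn n g -> smn n (fun t r => f t r * g t r).
Proof.
  induction n as [|n IH]; intros f g Hf Hg.
  - apply smn_mult0; auto.
  - assert (H0f := smn_le _ _ _ (le_0_n (S n)) Hf).
    assert (H0g := smn_le _ _ _ (le_0_n (S n)) Hg).
    assert (Hf' := smn_le (S n) n _ (le_S _ _ (le_n n)) Hf).
    assert (Hg' := smn_le (S n) n _ (le_S _ _ (le_n n)) Hg).
    apply smn_S.
    + apply (smn_mult0 _ _ H0f H0g).
    + apply smn_ext with (fun t r => iterD [true] f t r * g t r + f t r * iterD [true] g t r).
      { intros t r; simpl. rewrite Derive_mult; auto.
        apply (smn0_e f t r H0f). apply (smn0_e g t r H0g). }
      apply smn_plus; apply IH; auto; apply smn_D; auto.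
    + apply smn_ext with (fun t r => iterD [false] f t r * g t r + f t r * iterD [false] g t r).
      { intros t r; simpl. rewrite Derive_mult; auto.
        apply (smn0_e f t r H0f). apply (smn0_e g t r H0g). }
      apply smn_plus; apply IH; auto; apply smn_D; auto.
Qed.

Lemma smn_const n : forall c, smn n (fun _ _ => c).
Proof.
  induction n as [|n IH]; intros c.
  - apply smn0; intros; repeat split; [apply ex_derive_const|apply ex_derive_const|apply continuous_const].
  - apply smn_S.
    + apply smn0; intros; repeat split; [apply ex_derive_const|apply ex_derive_const|apply continuous_const].
    + apply smn_ext with (fun _ _ => 0); [intros; simpl; rewrite Derive_const; reflexivity| apply IH].
    + apply smn_ext with (fun _ _ => 0); [intros; simpl; rewrite Derive_const; reflexivity| apply IH].
Qed.

Lemma sm_plus f g : smooth2 f -> smooth2 g -> smooth2 (fun t r => f t r + g t r).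
Proof. rewrite !smooth2_smn; intros; apply smn_plus; auto. Qed.
Lemma sm_mult f g : smooth2 f -> smooth2 g -> smooth2 (fun t r => f t r * g t r).
Proof. rewrite !smooth2_smn; intros; apply smn_mult; auto. Qed.
Lemma sm_const c : smooth2 (fun _ _ => c).
Proof. rewrite smooth2_smn; intros; apply smn_const. Qed.
Lemma sm_ext f g : (forall t r, f t r = g t r) -> smooth2 f -> smooth2 g.
Proof. rewrite !smooth2_smn; intros; eapply smn_ext; eauto. Qed.
Lemma sm_nprod f g : smooth2 f -> smooth2 g -> smooth2 (fun t r => - (f t r * g t r)).
Proof.
  intros; apply sm_ext with (fun t r => (-1) * (f t r * g t r)); [intros; ring|].
  apply sm_mult; [apply sm_const| apply sm_mult; auto].
Qed.
Lemma sm_D b f : smooth2 f -> smooth2 (iterD [b] f).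
Proof. rewrite !smooth2_smn; intros H n; apply smn_D, H. Qed.

Lemma sm_cont l f t r : smooth2 f -> continuity_2d_pt (iterD l f) t r.
Proof. intros H; apply continuity_2d_pt_filterlim; apply (H l t r). Qed.

Lemma edt f t r : smooth2 f -> ex_derive (fun s => f s r) t.
Proof. intros h; exact (proj1 (h nil t r)). Qed.
Lemma edr f t r : smooth2 f -> ex_derive (fun s => f t s) r.
Proof. intros h; exact (proj1 (proj2 (h nil t r))). Qed.

Definition Econd (A1 A2 A3 W1 W2 W3 W4 W5 W6 W7 W8 : R -> R -> R) : Prop :=
 (forall t r, Derive (fun s => W1 t s) r = (Derive (fun s=>A2 s r) t * W2 t r + A2 t r * Derive (fun s => W2 s r) t - Derive (fun s => A1 t s) r * W1 t r)/A1 t r) /\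
 (forall t r, Derive (fun s => W5 t s) r = (Derive (fun s=>A2 s r) t * W6 t r + A2 t r * Derive (fun s => W6 s r) t - Derive (fun s => A1 t s) r * W5 t r)/A1 t r) /\
 (forall t r, Derive (fun s => W3 s r) t = W4 t r * A1 t r * W1 t r - W7 t r * A1 t r * W5 t r - Derive (fun s => A3 s r) t * W3 t r / A3 t r) /\
 (forall t r, Derive (fun s => W4 s r) t = - W3 t r * A1 t r * W1 t r - W8 t r * A1 t r * W5 t r - Derive (fun s => A3 s r) t * W4 t r / A3 t r) /\
 (forall t r, Derive (fun s => W7 s r) t = W8 t r * A1 t r * W1 t r - W3 t r * A1 t r * W5 t r - Derive (fun s => A3 s r) t * W7 t r / A3 t r) /\
 (forall t r, Derive (fun s => W8 s r) t = - W7 t r * A1 t r * W1 t r - W4 t r * A1 t r * W5 t r - Derive (fun s => A3 s r) t * W8 t r / A3 t r) /\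
 (forall t r, Derive (fun s => W3 t s) r = W4 t r * A2 t r * W2 t r - W7 t r * A2 t r * W6 t r - Derive (fun s => A3 t s) r * W3 t r / A3 t r) /\
 (forall t r, Derive (fun s => W4 t s) r = - W3 t r * A2 t r * W2 t r - W8 t r * A2 t r * W6 t r - Derive (fun s => A3 t s) r * W4 t r / A3 t r) /\
 (forall t r, Derive (fun s => W7 t s) r = W8 t r * A2 t r * W2 t r - W3 t r * A2 t r * W6 t r - Derive (fun s => A3 t s) r * W7 t r / A3 t r) /\
 (forall t r, Derive (fun s => W8 t s) r = - W7 t r * A2 t r * W2 t r - W4 t r * A2 t r * W6 t r - Derive (fun s => A3 t s) r * W8 t r / A3 t r) /\
 (forall t r, A3 t r ^ 2 * (W3 t r ^ 2 + W4 t r ^ 2 - W7 t r ^ 2 - W8 t r ^ 2) = 1) /\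
 (forall t r, W7 t r * W4 t r = W8 t r * W3 t r).

Set Default Proof Using "All".
Section S.
Variables (A1 A2 A3 W1 W2 W3 W4 W5 W6 W7 W8 : R -> R -> R).
Hypothesis (hA1 : smooth2 A1) (hA2 : smooth2 A2) (hA3 : smooth2 A3)
  (nA1 : forall t r, A1 t r <> 0) (nA2 : forall t r, A2 t r <> 0)
  (nA3 : forall t r, A3 t r <> 0)
  (hW1 : smooth2 W1) (hW2 : smooth2 W2) (hW3 : smooth2 W3) (hW4 : smooth2 W4)
  (hW5 : smooth2 W5) (hW6 : smooth2 W6) (hW7 : smooth2 W7) (hW8 : smooth2 W8).

Variables (th0 : R) (Hth0 : 0 < th0 < PI).
Lemma sn0 : sin th0 <> 0.
Proof. apply Rgt_not_eq, sin_gt_0; lra. Qed.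

Ltac nz := repeat (match goal with
   | |- - _ <> 0 => apply Ropp_neq_0_compat
   | |- _ * _ <> 0 => apply Rmult_integral_contrapositive_currified end);
  first [ apply nA1 | apply nA2 | apply nA3 | apply sn0 ].
Ltac side := match goal with
  | |- ex_derive (fun s => ?F s ?r) ?t => exact (edt F t r ltac:(assumption))
  | |- ex_derive (fun s => ?F ?t s) ?r => exact (edr F t r ltac:(assumption))
  | |- True => exact I
  | |- _ => nz
  end.
Ltac derall := repeat match goal with |- context [Derive ?f ?x] =>
   lazymatch f with
   | (fun s => ?F s ?r) => fail
   | (fun s => ?F ?r s) => fail
   | _ => erewrite (is_derive_unique f x); [ | auto_derive; [ repeat split; side | reflexivity ] ]
   end end.
Ltac prep := cbv beta iota delta [curvC om1 pd sum4 omU omL cof eta fold_right map idx]; derall.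
Lemma c341 t r ph : exists k, curvC A1 A2 A3 W1 W2 W3 W4 W5 W6 W7 W8 3 4 1 2 t r th0 ph = k * (Derive (fun s => W1 t s) r - ((Derive (fun s=>A2 s r) t * W2 t r + A2 t r * Derive (fun s => W2 s r) t - Derive (fun s => A1 t s) r * W1 t r)/A1 t r)) /\ k <> 0.
Proof. prep. first [ (exists ((A1 t r)); split; [field; repeat split; nz | nz]) | (exists (-(A1 t r)); split; [field; repeat split; nz | nz]) | (exists ((A2 t r)); split; [field; repeat split; nz | nz]) | (exists (-(A2 t r)); split; [field; repeat split; nz | nz]) | (exists ((A3 t r)); split; [field; repeat split; nz | nz]) | (exists (-(A3 t r)); split; [field; repeat split; nz | nz]) | (exists ((A3 t r * sin th0)); split; [field; repeat split; nz | nz]) | (exists (-(A3 t r * sin th0)); split; [field; repeat split; nz | nz]) ]. Qed.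
Lemma c1212 t r ph : exists k, curvC A1 A2 A3 W1 W2 W3 W4 W5 W6 W7 W8 1 2 1 2 t r th0 ph = k * (Derive (fun s => W5 t s) r - ((Derive (fun s=>A2 s r) t * W6 t r + A2 t r * Derive (fun s => W6 s r) t - Derive (fun s => A1 t s) r * W5 t r)/A1 t r)) /\ k <> 0.
Proof. prep. first [ (exists ((A1 t r)); split; [field; repeat split; nz | nz]) | (exists (-(A1 t r)); split; [field; repeat split; nz | nz]) | (exists ((A2 t r)); split; [field; repeat split; nz | nz]) | (exists (-(A2 t r)); split; [field; repeat split; nz | nz]) | (exists ((A3 t r)); split; [field; repeat split; nz | nz]) | (exists (-(A3 t r)); split; [field; repeat split; nz | nz]) | (exists ((A3 t r * sin th0)); split; [field; repeat split; nz | nz]) | (exists (-(A3 t r * sin th0)); split; [field; repeat split; nz | nz]) ]. Qed.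
Lemma cW3t t r ph : exists k, curvC A1 A2 A3 W1 W2 W3 W4 W5 W6 W7 W8 2 3 1 3 t r th0 ph = k * (Derive (fun s => W3 s r) t - (W4 t r * A1 t r * W1 t r - W7 t r * A1 t r * W5 t r - Derive (fun s => A3 s r) t * W3 t r / A3 t r)) /\ k <> 0.
Proof. prep. first [ (exists ((A1 t r)); split; [field; repeat split; nz | nz]) | (exists (-(A1 t r)); split; [field; repeat split; nz | nz]) | (exists ((A2 t r)); split; [field; repeat split; nz | nz]) | (exists (-(A2 t r)); split; [field; repeat split; nz | nz]) | (exists ((A3 t r)); split; [field; repeat split; nz | nz]) | (exists (-(A3 t r)); split; [field; repeat split; nz | nz]) | (exists ((A3 t r * sin th0)); split; [field; repeat split; nz | nz]) | (exists (-(A3 t r * sin th0)); split; [field; repeat split; nz | nz]) ]. Qed.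
Lemma cW4t t r ph : exists k, curvC A1 A2 A3 W1 W2 W3 W4 W5 W6 W7 W8 2 3 1 4 t r th0 ph = k * (Derive (fun s => W4 s r) t - (- W3 t r * A1 t r * W1 t r - W8 t r * A1 t r * W5 t r - Derive (fun s => A3 s r) t * W4 t r / A3 t r)) /\ k <> 0.
Proof. prep. first [ (exists ((A1 t r)); split; [field; repeat split; nz | nz]) | (exists (-(A1 t r)); split; [field; repeat split; nz | nz]) | (exists ((A2 t r)); split; [field; repeat split; nz | nz]) | (exists (-(A2 t r)); split; [field; repeat split; nz | nz]) | (exists ((A3 t r)); split; [field; repeat split; nz | nz]) | (exists (-(A3 t r)); split; [field; repeat split; nz | nz]) | (exists ((A3 t r * sin th0)); split; [field; repeat split; nz | nz]) | (exists (-(A3 t r * sin th0)); split; [field; repeat split; nz | nz]) ]. Qed.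
Lemma cW7t t r ph : exists k, curvC A1 A2 A3 W1 W2 W3 W4 W5 W6 W7 W8 1 3 1 3 t r th0 ph = k * (Derive (fun s => W7 s r) t - (W8 t r * A1 t r * W1 t r - W3 t r * A1 t r * W5 t r - Derive (fun s => A3 s r) t * W7 t r / A3 t r)) /\ k <> 0.
Proof. prep. first [ (exists ((A1 t r)); split; [field; repeat split; nz | nz]) | (exists (-(A1 t r)); split; [field; repeat split; nz | nz]) | (exists ((A2 t r)); split; [field; repeat split; nz | nz]) | (exists (-(A2 t r)); split; [field; repeat split; nz | nz]) | (exists ((A3 t r)); split; [field; repeat split; nz | nz]) | (exists (-(A3 t r)); split; [field; repeat split; nz | nz]) | (exists ((A3 t r * sin th0)); split; [field; repeat split; nz | nz]) | (exists (-(A3 t r * sin th0)); split; [field; repeat split; nz | nz]) ]. Qed.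
Lemma cW8t t r ph : exists k, curvC A1 A2 A3 W1 W2 W3 W4 W5 W6 W7 W8 1 3 1 4 t r th0 ph = k * (Derive (fun s => W8 s r) t - (- W7 t r * A1 t r * W1 t r - W4 t r * A1 t r * W5 t r - Derive (fun s => A3 s r) t * W8 t r / A3 t r)) /\ k <> 0.
Proof. prep. first [ (exists ((A1 t r)); split; [field; repeat split; nz | nz]) | (exists (-(A1 t r)); split; [field; repeat split; nz | nz]) | (exists ((A2 t r)); split; [field; repeat split; nz | nz]) | (exists (-(A2 t r)); split; [field; repeat split; nz | nz]) | (exists ((A3 t r)); split; [field; repeat split; nz | nz]) | (exists (-(A3 t r)); split; [field; repeat split; nz | nz]) | (exists ((A3 t r * sin th0)); split; [field; repeat split; nz | nz]) | (exists (-(A3 t r * sin th0)); split; [field; repeat split; nz | nz]) ]. Qed.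
Lemma cW3r t r ph : exists k, curvC A1 A2 A3 W1 W2 W3 W4 W5 W6 W7 W8 2 3 2 3 t r th0 ph = k * (Derive (fun s => W3 t s) r - (W4 t r * A2 t r * W2 t r - W7 t r * A2 t r * W6 t r - Derive (fun s => A3 t s) r * W3 t r / A3 t r)) /\ k <> 0.
Proof. prep. first [ (exists ((A1 t r)); split; [field; repeat split; nz | nz]) | (exists (-(A1 t r)); split; [field; repeat split; nz | nz]) | (exists ((A2 t r)); split; [field; repeat split; nz | nz]) | (exists (-(A2 t r)); split; [field; repeat split; nz | nz]) | (exists ((A3 t r)); split; [field; repeat split; nz | nz]) | (exists (-(A3 t r)); split; [field; repeat split; nz | nz]) | (exists ((A3 t r * sin th0)); split; [field; repeat split; nz | nz]) | (exists (-(A3 t r * sin th0)); split; [field; repeat split; nz | nz]) ]. Qed.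
Lemma cW4r t r ph : exists k, curvC A1 A2 A3 W1 W2 W3 W4 W5 W6 W7 W8 2 3 2 4 t r th0 ph = k * (Derive (fun s => W4 t s) r - (- W3 t r * A2 t r * W2 t r - W8 t r * A2 t r * W6 t r - Derive (fun s => A3 t s) r * W4 t r / A3 t r)) /\ k <> 0.
Proof. prep. first [ (exists ((A1 t r)); split; [field; repeat split; nz | nz]) | (exists (-(A1 t r)); split; [field; repeat split; nz | nz]) | (exists ((A2 t r)); split; [field; repeat split; nz | nz]) | (exists (-(A2 t r)); split; [field; repeat split; nz | nz]) | (exists ((A3 t r)); split; [field; repeat split; nz | nz]) | (exists (-(A3 t r)); split; [field; repeat split; nz | nz]) | (exists ((A3 t r * sin th0)); split; [field; repeat split; nz | nz]) | (exists (-(A3 t r * sin th0)); split; [field; repeat split; nz | nz]) ]. Qed.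
Lemma cW7r t r ph : exists k, curvC A1 A2 A3 W1 W2 W3 W4 W5 W6 W7 W8 1 3 2 3 t r th0 ph = k * (Derive (fun s => W7 t s) r - (W8 t r * A2 t r * W2 t r - W3 t r * A2 t r * W6 t r - Derive (fun s => A3 t s) r * W7 t r / A3 t r)) /\ k <> 0.
Proof. prep. first [ (exists ((A1 t r)); split; [field; repeat split; nz | nz]) | (exists (-(A1 t r)); split; [field; repeat split; nz | nz]) | (exists ((A2 t r)); split; [field; repeat split; nz | nz]) | (exists (-(A2 t r)); split; [field; repeat split; nz | nz]) | (exists ((A3 t r)); split; [field; repeat split; nz | nz]) | (exists (-(A3 t r)); split; [field; repeat split; nz | nz]) | (exists ((A3 t r * sin th0)); split; [field; repeat split; nz | nz]) | (exists (-(A3 t r * sin th0)); split; [field; repeat split; nz | nz]) ]. Qed.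
Lemma cW8r t r ph : exists k, curvC A1 A2 A3 W1 W2 W3 W4 W5 W6 W7 W8 1 3 2 4 t r th0 ph = k * (Derive (fun s => W8 t s) r - (- W7 t r * A2 t r * W2 t r - W4 t r * A2 t r * W6 t r - Derive (fun s => A3 t s) r * W8 t r / A3 t r)) /\ k <> 0.
Proof. prep. first [ (exists ((A1 t r)); split; [field; repeat split; nz | nz]) | (exists (-(A1 t r)); split; [field; repeat split; nz | nz]) | (exists ((A2 t r)); split; [field; repeat split; nz | nz]) | (exists (-(A2 t r)); split; [field; repeat split; nz | nz]) | (exists ((A3 t r)); split; [field; repeat split; nz | nz]) | (exists (-(A3 t r)); split; [field; repeat split; nz | nz]) | (exists ((A3 t r * sin th0)); split; [field; repeat split; nz | nz]) | (exists (-(A3 t r * sin th0)); split; [field; repeat split; nz | nz]) ]. Qed.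
Lemma cC1 t r ph : curvC A1 A2 A3 W1 W2 W3 W4 W5 W6 W7 W8 3 4 3 4 t r th0 ph = sin th0 * (1 - A3 t r ^ 2 * (W3 t r ^ 2 + W4 t r ^ 2 - W7 t r ^ 2 - W8 t r ^ 2)).
Proof. prep. field; repeat split; nz. Qed.
Lemma cC2 t r ph : curvC A1 A2 A3 W1 W2 W3 W4 W5 W6 W7 W8 1 2 3 4 t r th0 ph = 2 * A3 t r ^ 2 * sin th0 * (W7 t r * W4 t r - W8 t r * W3 t r).
Proof. prep. field; repeat split; nz. Qed.

Lemma curvC0 (HE : Econd A1 A2 A3 W1 W2 W3 W4 W5 W6 W7 W8) a b m n t r ph :
  In a idx -> In b idx -> In m idx -> In n idx ->
  curvC A1 A2 A3 W1 W2 W3 W4 W5 W6 W7 W8 a b m n t r th0 ph = 0.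
Proof.
  destruct HE as (eW1r & eW5r & eW3t & eW4t & eW7t & eW8t & eW3r & eW4r & eW7r & eW8r & C1 & C2).
  unfold idx; simpl; intros Ha Hb Hm Hn.
  destruct Ha as [<-|[<-|[<-|[<-|[]]]]]; destruct Hb as [<-|[<-|[<-|[<-|[]]]]];
  destruct Hm as [<-|[<-|[<-|[<-|[]]]]]; destruct Hn as [<-|[<-|[<-|[<-|[]]]]];
  prep; rewrite ?eW1r, ?eW5r, ?eW3t, ?eW4t, ?eW7t, ?eW8t, ?eW3r, ?eW4r, ?eW7r, ?eW8r;
  first [ field; repeat split; nz
        | transitivity (2 * A3 t r ^ 2 * sin th0 * (W7 t r * W4 t r - W8 t r * W3 t r));
            [field; repeat split; nz | rewrite C2; ring]
        | transitivity (-(2 * A3 t r ^ 2 * sin th0 * (W7 t r * W4 t r - W8 t r * W3 t r)));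
            [field; repeat split; nz | rewrite C2; ring]
        | transitivity (sin th0 * (1 - A3 t r ^ 2 * (W3 t r ^ 2 + W4 t r ^ 2 - W7 t r ^ 2 - W8 t r ^ 2)));
            [field; repeat split; nz | rewrite C1; ring]
        | transitivity (-(sin th0 * (1 - A3 t r ^ 2 * (W3 t r ^ 2 + W4 t r ^ 2 - W7 t r ^ 2 - W8 t r ^ 2))));
            [field; repeat split; nz | rewrite C1; ring] ].
Qed.
End S.
Unset Default Proof Using.

Section F.
Variables (A1 A2 A3 W1 W2 W3 W4 W5 W6 W7 W8 : R -> R -> R).
Hypothesis (hA1 : smooth2 A1) (hA2 : smooth2 A2) (hA3 : smooth2 A3)
  (nA1 : forall t r, A1 t r <> 0) (nA2 : forall t r, A2 t r <> 0)
  (nA3 : forall t r, A3 t r <> 0)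
  (hW1 : smooth2 W1) (hW2 : smooth2 W2) (hW3 : smooth2 W3) (hW4 : smooth2 W4)
  (hW5 : smooth2 W5) (hW6 : smooth2 W6) (hW7 : smooth2 W7) (hW8 : smooth2 W8).

Lemma flat_of_E : Econd A1 A2 A3 W1 W2 W3 W4 W5 W6 W7 W8 -> flat A1 A2 A3 W1 W2 W3 W4 W5 W6 W7 W8.
Proof.
  intros HE a b c d Ha Hb Hc Hd t r th ph Hth.
  assert (Z : forall m n, In m idx -> In n idx ->
     curvC A1 A2 A3 W1 W2 W3 W4 W5 W6 W7 W8 a b m n t r th ph = 0).
  { intros m n Hm Hn; apply curvC0; auto. }
  unfold curv; cbv delta [sum4 idx map fold_right] beta iota.
  rewrite !Z by (simpl; tauto). ring.
Qed.

Lemma curv_diag a b c d t r ph : In c idx -> In d idx ->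
  curv A1 A2 A3 W1 W2 W3 W4 W5 W6 W7 W8 a b c d t r (PI/2) ph =
  fr A1 A2 A3 c c t r (PI/2) ph * fr A1 A2 A3 d d t r (PI/2) ph *
  curvC A1 A2 A3 W1 W2 W3 W4 W5 W6 W7 W8 a b c d t r (PI/2) ph.
Proof.
  unfold idx; simpl; intros Hc Hd.
  destruct Hc as [<-|[<-|[<-|[<-|[]]]]]; destruct Hd as [<-|[<-|[<-|[<-|[]]]]];
  unfold curv; cbv delta [sum4 idx map fold_right fr] beta iota; ring.
Qed.

Lemma frnz c t r ph : In c idx -> fr A1 A2 A3 c c t r (PI/2) ph <> 0.
Proof.
  unfold idx; simpl; intros Hc.
  destruct Hc as [<-|[<-|[<-|[<-|[]]]]]; unfold fr; apply Rinv_neq_0_compat; auto.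
  rewrite sin_PI2, Rmult_1_r; auto.
Qed.

Lemma PI2b : 0 < PI/2 < PI.
Proof. split; [apply PI2_RGT_0|]. assert (H := PI_RGT_0); lra. Qed.

Lemma flatC (Hf : flat A1 A2 A3 W1 W2 W3 W4 W5 W6 W7 W8) a b c d t r :
  In a idx -> In b idx -> In c idx -> In d idx ->
  curvC A1 A2 A3 W1 W2 W3 W4 W5 W6 W7 W8 a b c d t r (PI/2) 0 = 0.
Proof.
  intros Ha Hb Hc Hd.
  assert (H := Hf a b c d Ha Hb Hc Hd t r (PI/2) 0 PI2b).
  rewrite curv_diag in H by auto.
  apply Rmult_integral in H; destruct H as [H|H]; auto.
  apply Rmult_integral in H; destruct H as [H|H]; exfalso; revert H; apply frnz; auto.
Qed.

Ltac inidx := unfold idx; simpl; tauto.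

Ltac useC Hf L a b c d :=
  intros t r; destruct (L A1 A2 A3 W1 W2 W3 W4 W5 W6 W7 W8 hA1 hA2 hA3 nA1 nA2 nA3
     hW1 hW2 hW3 hW4 hW5 hW6 hW7 hW8 (PI/2) PI2b t r 0) as (k & Hk & Hk0);
  rewrite (flatC Hf a%nat b%nat c%nat d%nat t r) in Hk by inidx;
  symmetry in Hk; apply Rmult_integral in Hk; destruct Hk as [Hk|Hk]; [contradiction|lra].

Lemma E_of_flat (Hf : flat A1 A2 A3 W1 W2 W3 W4 W5 W6 W7 W8) : Econd A1 A2 A3 W1 W2 W3 W4 W5 W6 W7 W8.
Proof.
  repeat split.
  - useC Hf c341 3%nat 4%nat 1%nat 2%nat.
  - useC Hf c1212 1%nat 2%nat 1%nat 2%nat.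
  - useC Hf cW3t 2%nat 3%nat 1%nat 3%nat.
  - useC Hf cW4t 2%nat 3%nat 1%nat 4%nat.
  - useC Hf cW7t 1%nat 3%nat 1%nat 3%nat.
  - useC Hf cW8t 1%nat 3%nat 1%nat 4%nat.
  - useC Hf cW3r 2%nat 3%nat 2%nat 3%nat.
  - useC Hf cW4r 2%nat 3%nat 2%nat 4%nat.
  - useC Hf cW7r 1%nat 3%nat 2%nat 3%nat.
  - useC Hf cW8r 1%nat 3%nat 2%nat 4%nat.
  - intros t r. assert (H := cC1 A1 A2 A3 W1 W2 W3 W4 W5 W6 W7 W8 hA1 hA2 hA3 nA1 nA2 nA3
     hW1 hW2 hW3 hW4 hW5 hW6 hW7 hW8 (PI/2) PI2b t r 0).
    rewrite (flatC Hf 3%nat 4%nat 3%nat 4%nat t r) in H by inidx. rewrite sin_PI2 in H. lra.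
  - intros t r. assert (H := cC2 A1 A2 A3 W1 W2 W3 W4 W5 W6 W7 W8 hA1 hA2 hA3 nA1 nA2 nA3
     hW1 hW2 hW3 hW4 hW5 hW6 hW7 hW8 (PI/2) PI2b t r 0).
    rewrite (flatC Hf 1%nat 2%nat 3%nat 4%nat t r) in H by inidx. rewrite sin_PI2 in H.
    assert (A3 t r ^ 2 <> 0) by (apply pow_nonzero; auto).
    symmetry in H. rewrite Rmult_1_r in H.
    apply Rmult_integral in H. destruct H as [H|H]; [|lra].
    apply Rmult_integral in H; destruct H; [lra|contradiction].
Qed.
End F.

Lemma loc2_all (P : R -> R -> Prop) x y : (forall u v, P u v) -> locally_2d P x y.
Proof. intros H; exists (mkposreal 1 Rlt_0_1); intros; apply H. Qed.


Lemma schwarz_sm f t r : smooth2 f ->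
  Derive (fun x => Derive (fun u => f u x) t) r = Derive (fun x => Derive (fun u => f x u) r) t.
Proof.
  intros H. symmetry. apply Schwarz.
  - apply loc2_all; intros u v; repeat split.
    + apply (H nil u v).
    + apply (H nil u v).
    + apply (H [false] u v).
    + apply (H [true] u v).
  - apply (sm_cont [true; false] f t r H).
  - apply (sm_cont [false; true] f t r H).
Qed.

Lemma edt1 f t r : smooth2 f -> ex_derive (fun s => Derive (fun u => f u r) s) t.
Proof. intros h; exact (proj1 (h [true] t r)). Qed.
Lemma edr1 f t r : smooth2 f -> ex_derive (fun s => Derive (fun u => f t u) s) r.
Proof. intros h; exact (proj1 (proj2 (h [false] t r))). Qed.
Lemma edtr f t r : smooth2 f -> ex_derive (fun s => Derive (fun u => f s u) r) t.
Proof. intros h; exact (proj1 (h [false] t r)). Qed.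
Lemma edrt f t r : smooth2 f -> ex_derive (fun s => Derive (fun u => f u s) t) r.
Proof. intros h; exact (proj1 (proj2 (h [true] t r))). Qed.

Lemma sch f t r : smooth2 f -> Derive (fun x => dt f t x) r = Derive (fun x => dr f x r) t.
Proof. intros H; unfold dt, dr; apply schwarz_sm; auto. Qed.

Section B.
Variables (A1 A2 A3 W1 W2 W3 W4 W5 W6 W7 W8 chi psi : R -> R -> R).
Hypothesis (hA1 : smooth2 A1) (hA2 : smooth2 A2) (hA3 : smooth2 A3)
  (nA1 : forall t r, A1 t r <> 0) (nA2 : forall t r, A2 t r <> 0)
  (nA3 : forall t r, A3 t r <> 0) (hchi : smooth2 chi) (hpsi : smooth2 psi).
Hypothesis HW : forall t r : R,
      W1 t r = - dt chi t r / A1 t r /\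
      W2 t r = - dr chi t r / A2 t r /\
      W3 t r = cosh (psi t r) * cos (chi t r) / A3 t r /\
      W4 t r = cosh (psi t r) * sin (chi t r) / A3 t r /\
      W5 t r = - dt psi t r / A1 t r /\
      W6 t r = - dr psi t r / A2 t r /\
      W7 t r = sinh (psi t r) * cos (chi t r) / A3 t r /\
      W8 t r = sinh (psi t r) * sin (chi t r) / A3 t r.

Lemma w1 t r : W1 t r = - dt chi t r / A1 t r. Proof. apply HW. Qed.
Lemma w2 t r : W2 t r = - dr chi t r / A2 t r. Proof. apply HW. Qed.
Lemma w3 t r : W3 t r = cosh (psi t r) * cos (chi t r) / A3 t r. Proof. apply HW. Qed.
Lemma w4 t r : W4 t r = cosh (psi t r) * sin (chi t r) / A3 t r. Proof. apply HW. Qed.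
Lemma w5 t r : W5 t r = - dt psi t r / A1 t r. Proof. apply HW. Qed.
Lemma w6 t r : W6 t r = - dr psi t r / A2 t r. Proof. apply HW. Qed.
Lemma w7 t r : W7 t r = sinh (psi t r) * cos (chi t r) / A3 t r. Proof. apply HW. Qed.
Lemma w8 t r : W8 t r = sinh (psi t r) * sin (chi t r) / A3 t r. Proof. apply HW. Qed.
Lemma hdtc : smooth2 (dt chi). Proof. exact (sm_D true chi hchi). Qed.
Lemma hdrc : smooth2 (dr chi). Proof. exact (sm_D false chi hchi). Qed.
Lemma hdtp : smooth2 (dt psi). Proof. exact (sm_D true psi hpsi). Qed.
Lemma hdrp : smooth2 (dr psi). Proof. exact (sm_D false psi hpsi). Qed.

Ltac nz := repeat (match goal with
   | |- - _ <> 0 => apply Ropp_neq_0_compat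
   | |- _ * _ <> 0 => apply Rmult_integral_contrapositive_currified end);
  first [ apply nA1 | apply nA2 | apply nA3 ].
Ltac smt := first [assumption | apply hdtc | apply hdrc | apply hdtp | apply hdrp].
Ltac side := match goal with
  | |- ex_derive (fun s => ?F s ?r) ?t => exact (edt F t r ltac:(smt))
  | |- ex_derive (fun s => ?F ?t s) ?r => exact (edr F t r ltac:(smt))
  | |- True => exact I
  | |- _ => nz
  end.

Lemma dW1t t r : Derive (fun s => W1 s r) t = Derive (fun s => - dt chi s r / A1 s r) t.
Proof. apply Derive_ext; intros; apply w1. Qed.
Lemma dW1r t r : Derive (fun s => W1 t s) r = Derive (fun s => - dt chi t s / A1 t s) r.
Proof. apply Derive_ext; intros; apply w1. Qed.
Lemma dW2t t r : Derive (fun s => W2 s r) t = Derive (fun s => - dr chi s r / A2 s r) t.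
Proof. apply Derive_ext; intros; apply w2. Qed.
Lemma dW2r t r : Derive (fun s => W2 t s) r = Derive (fun s => - dr chi t s / A2 t s) r.
Proof. apply Derive_ext; intros; apply w2. Qed.
Lemma dW3t t r : Derive (fun s => W3 s r) t = Derive (fun s => cosh (psi s r) * cos (chi s r) / A3 s r) t.
Proof. apply Derive_ext; intros; apply w3. Qed.
Lemma dW3r t r : Derive (fun s => W3 t s) r = Derive (fun s => cosh (psi t s) * cos (chi t s) / A3 t s) r.
Proof. apply Derive_ext; intros; apply w3. Qed.
Lemma dW4t t r : Derive (fun s => W4 s r) t = Derive (fun s => cosh (psi s r) * sin (chi s r) / A3 s r) t.
Proof. apply Derive_ext; intros; apply w4. Qed.
Lemma dW4r t r : Derive (fun s => W4 t s) r = Derive (fun s => cosh (psi t s) * sin (chi t s) / A3 t s) r.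
Proof. apply Derive_ext; intros; apply w4. Qed.
Lemma dW5t t r : Derive (fun s => W5 s r) t = Derive (fun s => - dt psi s r / A1 s r) t.
Proof. apply Derive_ext; intros; apply w5. Qed.
Lemma dW5r t r : Derive (fun s => W5 t s) r = Derive (fun s => - dt psi t s / A1 t s) r.
Proof. apply Derive_ext; intros; apply w5. Qed.
Lemma dW6t t r : Derive (fun s => W6 s r) t = Derive (fun s => - dr psi s r / A2 s r) t.
Proof. apply Derive_ext; intros; apply w6. Qed.
Lemma dW6r t r : Derive (fun s => W6 t s) r = Derive (fun s => - dr psi t s / A2 t s) r.
Proof. apply Derive_ext; intros; apply w6. Qed.
Lemma dW7t t r : Derive (fun s => W7 s r) t = Derive (fun s => sinh (psi s r) * cos (chi s r) / A3 s r) t.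
Proof. apply Derive_ext; intros; apply w7. Qed.
Lemma dW7r t r : Derive (fun s => W7 t s) r = Derive (fun s => sinh (psi t s) * cos (chi t s) / A3 t s) r.
Proof. apply Derive_ext; intros; apply w7. Qed.
Lemma dW8t t r : Derive (fun s => W8 s r) t = Derive (fun s => sinh (psi s r) * sin (chi s r) / A3 s r) t.
Proof. apply Derive_ext; intros; apply w8. Qed.
Lemma dW8r t r : Derive (fun s => W8 t s) r = Derive (fun s => sinh (psi t s) * sin (chi t s) / A3 t s) r.
Proof. apply Derive_ext; intros; apply w8. Qed.
Ltac derall := repeat match goal with |- context [Derive ?f ?x] =>
   lazymatch f with
   | (fun s => ?F s ?r) => fail
   | (fun s => ?F ?r s) => fail
   | _ => erewrite (is_derive_unique f x); [ | auto_derive; [ repeat split; side | reflexivity ] ]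
   end end.
Ltac go := intros t r; rewrite ?dW1t, ?dW1r, ?dW2t, ?dW2r, ?dW3t, ?dW3r, ?dW4t, ?dW4r, ?dW5t, ?dW5r, ?dW6t, ?dW6r, ?dW7t, ?dW7r, ?dW8t, ?dW8r;
  rewrite ?w1, ?w2, ?w3, ?w4, ?w5, ?w6, ?w7, ?w8; unfold cosh, sinh; derall;
  try rewrite (sch chi) by auto; try rewrite (sch psi) by auto; unfold dt, dr.


Lemma cosh_sinh x : cosh x ^ 2 - sinh x ^ 2 = 1.
Proof.
  unfold cosh, sinh. assert (H : exp x * exp (- x) = 1) by (rewrite <- exp_plus; replace (x + - x) with 0 by ring; apply exp_0).
  replace ((exp x + exp (- x)) / 2) with ((exp x + exp (- x)) * / 2) by reflexivity.
  nra.
Qed.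

Lemma E_of_chi : Econd A1 A2 A3 W1 W2 W3 W4 W5 W6 W7 W8.
Proof.
  repeat split.
  - go. field; repeat split; nz.
  - go. field; repeat split; nz.
  - go. field; repeat split; nz.
  - go. field; repeat split; nz.
  - go. field; repeat split; nz.
  - go. field; repeat split; nz.
  - go. field; repeat split; nz.
  - go. field; repeat split; nz.
  - go. field; repeat split; nz.
  - go. field; repeat split; nz.
  - intros t r. rewrite w3, w4, w7, w8.
    transitivity ((cosh (psi t r) ^ 2 - sinh (psi t r) ^ 2) * (sin (chi t r) ^ 2 + cos (chi t r) ^ 2)).
    + field. nz.
    + rewrite cosh_sinh. assert (Hs := sin2_cos2 (chi t r)). unfold Rsqr in Hs. nra.
  - intros t r. rewrite w3, w4, w7, w8. field. nz.
Qed.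
End B.

Lemma loc_R (x : R) (P : R -> Prop) : locally x P -> exists d : posreal, forall y, Rabs (y - x) < d -> P y.
Proof. intros [d Hd]; exists d; intros y Hy; apply Hd; exact Hy. Qed.

Lemma cont_joint (F g : R -> R -> R) t r :
  (forall u v, is_derive (fun s => F u s) v (g u v)) ->
  continuity_2d_pt g t r ->
  continuity_pt (fun s => F s r) t ->
  continuity_2d_pt F t r.
Proof.
  intros HF Hg Ht eps.
  destruct (Hg (mkposreal 1 Rlt_0_1)) as [d1 Hd1]; simpl in Hd1.
  assert (He2 : 0 < eps / 2) by (destruct eps; simpl; lra).
  destruct (loc_R _ _ (proj1 (continuity_pt_locally _ _) Ht (mkposreal _ He2))) as [d2 Hd2]; simpl in Hd2.
  set (M := Rabs (g t r) + 1).
  assert (HM : 0 < M) by (unfold M; assert (H := Rabs_pos (g t r)); lra).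
  assert (He3 : 0 < eps / (2 * M)) by (destruct eps; simpl; apply Rdiv_lt_0_compat; lra).
  assert (Hd : 0 < Rmin d1 (Rmin d2 (eps / (2 * M)))).
  { destruct d1, d2; simpl; repeat apply Rmin_pos; lra. }
  exists (mkposreal _ Hd); simpl; intros u v Hu Hv.
  assert (Hu1 : Rabs (u - t) < d1) by (eapply Rlt_le_trans; [exact Hu| apply Rmin_l]).
  assert (Hu2 : Rabs (u - t) < d2) by (eapply Rlt_le_trans; [exact Hu| eapply Rle_trans; [apply Rmin_r|apply Rmin_l]]).
  assert (Hv1 : Rabs (v - r) < d1) by (eapply Rlt_le_trans; [exact Hv| apply Rmin_l]).
  assert (Hv3 : Rabs (v - r) < eps / (2 * M)) by (eapply Rlt_le_trans; [exact Hv| eapply Rle_trans; [apply Rmin_r|apply Rmin_r]]).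
  destruct (MVT_gen (fun s => F u s) r v (g u)) as [c [Hc Hmvt]].
  { intros x _; apply HF. }
  { intros x _. apply continuity_pt_filterlim. apply (ex_derive_continuous (fun s => F u s)). eexists; apply HF. }
  assert (Hcr : Rabs (c - r) <= Rabs (v - r)).
  { unfold Rmin, Rmax in Hc; destruct (Rle_dec r v); unfold Rabs; destruct Rcase_abs; destruct Rcase_abs; lra. }
  assert (Hgc : Rabs (g u c) < M).
  { assert (H := Hd1 u c Hu1 ltac:(lra)). unfold M.
    assert (H2 := Rabs_triang_inv (g u c) (g t r)). lra. }
  assert (H1 : Rabs (F u v - F u r) < eps / 2).
  { rewrite Hmvt, Rabs_mult.
    apply Rle_lt_trans with (M * Rabs (v - r)).
    - apply Rmult_le_compat_r; [apply Rabs_pos| lra].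
    - replace (eps / 2) with (M * (eps / (2 * M))) by (field; lra).
      apply Rmult_lt_compat_l; auto. }
  assert (H2 := Hd2 u Hu2).
  replace (F u v - F t r) with ((F u v - F u r) + (F u r - F t r)) by ring.
  eapply Rle_lt_trans; [apply Rabs_triang|]. lra.
Qed.

Lemma cont_r f t r : smooth2 f -> continuous (fun s => f t s) r.
Proof.
  intros H. apply (continuous_comp_2 (fun _ : R => t) (fun s : R => s) f).
  - apply continuous_const.
  - apply continuous_id.
  - exact (proj2 (proj2 (H nil t r))).
Qed.
Lemma cont_t f t r : smooth2 f -> continuous (fun s => f s r) t.
Proof.
  intros H. apply (continuous_comp_2 (fun s : R => s) (fun _ : R => r) f).
  - apply continuous_id.
  - apply continuous_const.
  - exact (proj2 (proj2 (H nil t r))).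
Qed.

Lemma exRInt_r f t a b : smooth2 f -> ex_RInt (fun s => f t s) a b.
Proof. intros H; apply (@ex_RInt_continuous R_CompleteNormedModule (fun s => f t s) a b); intros; apply cont_r; auto. Qed.
Lemma exRInt_t f r a b : smooth2 f -> ex_RInt (fun s => f s r) a b.
Proof. intros H; apply (@ex_RInt_continuous R_CompleteNormedModule (fun s => f s r) a b); intros; apply cont_t; auto. Qed.

Lemma ftc_r f t r : smooth2 f -> is_derive (fun b => RInt (fun s => f t s) 0 b) r (f t r).
Proof.
  intros H. apply (is_derive_RInt (fun s => f t s) (fun b => RInt (fun s => f t s) 0 b) 0).
  - apply filter_forall; intros b; apply (@RInt_correct R_CompleteNormedModule), exRInt_r; auto.
  - apply cont_r; auto.
Qed.
Lemma ftc_t f t r : smooth2 f -> is_derive (fun b => RInt (fun s => f s r) 0 b) t (f t r).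
Proof.
  intros H. apply (is_derive_RInt (fun s => f s r) (fun b => RInt (fun s => f s r) 0 b) 0).
  - apply filter_forall; intros b; apply (@RInt_correct R_CompleteNormedModule), exRInt_t; auto.
  - apply cont_t; auto.
Qed.

Lemma param_t f t r : smooth2 f ->
  is_derive (fun x => RInt (fun s => f x s) 0 r) t (RInt (fun s => Derive (fun z => f z s) t) 0 r).
Proof.
  intros H. apply (is_derive_RInt_param f 0 r t).
  - apply filter_forall; intros x u _; exact (proj1 (H nil x u)).
  - intros u _. apply continuity_2d_pt_filterlim. exact (proj2 (proj2 (H [true] t u))).
  - apply filter_forall; intros y; apply exRInt_r; auto.
Qed.

Lemma isd_const (c x : R) : is_derive (fun _ : R => c) x 0.
Proof. apply (@is_derive_const R_AbsRing R_NormedModule). Qed.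

Lemma integ (ft fr : R -> R -> R) c0 : smooth2 ft -> smooth2 fr ->
  (forall t r, Derive (fun s => ft t s) r = Derive (fun s => fr s r) t) ->
  exists F, smooth2 F /\ F 0 0 = c0 /\ forall t r,
    is_derive (fun s => F s r) t (ft t r) /\ is_derive (fun s => F t s) r (fr t r).
Proof.
  intros Ht Hr Hc.
  set (F := fun t r => c0 + RInt (fun s => ft s 0) 0 t + RInt (fun s => fr t s) 0 r).
  assert (DR : forall t r, is_derive (fun s => F t s) r (fr t r)).
  { intros t r. unfold F.
    apply (is_derive_ext (fun s => (c0 + RInt (fun s0 => ft s0 0) 0 t) + RInt (fun s0 => fr t s0) 0 s)).
    { intros; reflexivity. }
    replace (fr t r) with (0 + fr t r) by ring.
    apply (is_derive_plus (fun _ => c0 + RInt (fun s0 => ft s0 0) 0 t) (fun s => RInt (fun s0 => fr t s0) 0 s)).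
    - apply isd_const.
    - apply ftc_r; auto. }
  assert (DT : forall t r, is_derive (fun s => F s r) t (ft t r)).
  { intros t r. unfold F.
    assert (HI : RInt (fun s => Derive (fun z => fr z s) t) 0 r = ft t r - ft t 0).
    { rewrite <- (RInt_ext (fun s => Derive (fun z => ft t z) s)) by (intros; apply Hc).
      apply (RInt_Derive (fun z => ft t z)).
      - intros; exact (proj1 (proj2 (Ht nil t x))).
      - intros; apply (cont_r (iterD [false] ft) t x). apply sm_D; auto. }
    replace (ft t r) with (0 + ft t 0 + (ft t r - ft t 0)) by ring.
    apply (is_derive_plus (fun s => c0 + RInt (fun s0 => ft s0 0) 0 s) (fun s => RInt (fun s0 => fr s s0) 0 r)).
    - apply (is_derive_plus (fun _ => c0) (fun s => RInt (fun s0 => ft s0 0) 0 s)).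
      + apply isd_const.
      + apply ftc_t; auto.
    - rewrite <- HI. apply param_t; auto. }
  exists F; split; [|split].
  - apply smooth2_smn; intros n. destruct n as [|n].
    + apply smn0; intros t r; repeat split.
      * eexists; apply DT.
      * eexists; apply DR.
      * apply continuity_2d_pt_filterlim.
        apply (cont_joint F fr t r DR).
        -- apply (sm_cont nil fr t r Hr).
        -- apply continuity_pt_filterlim. apply (ex_derive_continuous (fun s => F s r)). eexists; apply DT.
    + apply smn_S.
      * apply smn0; intros t r; repeat split.
        -- eexists; apply DT.
        -- eexists; apply DR.
        -- apply continuity_2d_pt_filterlim.
           apply (cont_joint F fr t r DR).
           ++ apply (sm_cont nil fr t r Hr).
           ++ apply continuity_pt_filterlim. apply (ex_derive_continuous (fun s => F s r)). eexists; apply DT.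
      * apply smn_ext with ft; [intros t r; simpl; symmetry; apply is_derive_unique, DT|].
        apply smooth2_smn; auto.
      * apply smn_ext with fr; [intros t r; simpl; symmetry; apply is_derive_unique, DR|].
        apply smooth2_smn; auto.
  - unfold F. rewrite !RInt_point. unfold zero; simpl; ring.
  - intros; split; auto.
Qed.

Lemma const1 (f : R -> R) a b : (forall x, is_derive f x 0) -> f a = f b.
Proof.
  intros H. destruct (Rtotal_order a b) as [Hab|[Hab|Hab]].
  - apply (@eq_is_derive R_NormedModule f a b); auto.
  - subst; reflexivity.
  - symmetry; apply (@eq_is_derive R_NormedModule f b a); auto.
Qed.

Lemma const2 (K : R -> R -> R) : (forall t r, is_derive (fun s => K s r) t 0) ->
  (forall t r, is_derive (fun s => K t s) r 0) -> forall t r, K t r = K 0 0.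
Proof.
  intros Ht Hr t r.
  rewrite (const1 (fun s => K s r) t 0) by auto.
  apply (const1 (fun s => K 0 s) r 0); auto.
Qed.

Lemma angle x y : x ^ 2 + y ^ 2 = 1 -> exists a, cos a = x /\ sin a = y.
Proof.
  intros H.
  assert (Hx : -1 <= x <= 1) by nra.
  assert (Hs : sqrt (1 - x²) = Rabs y).
  { replace (1 - x²) with (y²) by (unfold Rsqr; nra). apply sqrt_Rsqr_abs. }
  destruct (Rle_dec 0 y) as [Hy|Hy].
  - exists (acos x); split; [apply cos_acos; auto|]. rewrite sin_acos, Hs by auto. apply Rabs_right; lra.
  - exists (- acos x); split; [rewrite cos_neg; apply cos_acos; auto|]. rewrite sin_neg, sin_acos, Hs by auto.
    rewrite Rabs_left; lra.
Qed.

Lemma alg (c s C S U V P Q : R) : c^2+s^2=1 -> C^2-S^2=1 ->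
  c*(C*U - S*P) + s*(C*V - S*Q) = 1 -> c*(C*V-S*Q) - s*(C*U - S*P) = 0 ->
  c*(C*P - S*U) + s*(C*Q - S*V) = 0 -> c*(C*Q - S*V) - s*(C*P - S*U) = 0 ->
  U = C*c /\ V = C*s /\ P = S*c /\ Q = S*s.
Proof.
  intros Hcs HCS H1 H2 H3 H4.
  set (X1 := C*U - S*P) in *. set (X2 := C*V - S*Q) in *.
  set (Y1 := C*P - S*U) in *. set (Y2 := C*Q - S*V) in *.
  assert (eX1 : X1 = c * (c*X1 + s*X2) - s * (c*X2 - s*X1))
    by (transitivity (X1 * (c^2+s^2)); [rewrite Hcs; ring | ring]).
  assert (eX2 : X2 = s * (c*X1 + s*X2) + c * (c*X2 - s*X1))
    by (transitivity (X2 * (c^2+s^2)); [rewrite Hcs; ring | ring]).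
  assert (eY1 : Y1 = c * (c*Y1 + s*Y2) - s * (c*Y2 - s*Y1))
    by (transitivity (Y1 * (c^2+s^2)); [rewrite Hcs; ring | ring]).
  assert (eY2 : Y2 = s * (c*Y1 + s*Y2) + c * (c*Y2 - s*Y1))
    by (transitivity (Y2 * (c^2+s^2)); [rewrite Hcs; ring | ring]).
  rewrite H1, H2 in eX1, eX2. rewrite H3, H4 in eY1, eY2.
  assert (eU : U = C * X1 + S * Y1) by (unfold X1, Y1; transitivity (U * (C^2-S^2)); [rewrite HCS; ring| ring]).
  assert (eV : V = C * X2 + S * Y2) by (unfold X2, Y2; transitivity (V * (C^2-S^2)); [rewrite HCS; ring| ring]).
  assert (eP : P = S * X1 + C * Y1) by (unfold X1, Y1; transitivity (P * (C^2-S^2)); [rewrite HCS; ring| ring]).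
  assert (eQ : Q = S * X2 + C * Y2) by (unfold X2, Y2; transitivity (Q * (C^2-S^2)); [rewrite HCS; ring| ring]).
  rewrite eX1, eY1 in eU, eP. rewrite eX2, eY2 in eV, eQ.
  repeat split; [rewrite eU|rewrite eV|rewrite eP|rewrite eQ]; ring.
Qed.

Lemma cosh_pos x : 0 < cosh x.
Proof. unfold cosh. assert (H1 := exp_pos x). assert (H2 := exp_pos (-x)). lra. Qed.

Lemma init_alg u v p q rho :
  0 < rho -> rho * rho = u^2 + v^2 -> u^2+v^2-p^2-q^2 = 1 -> p*v = q*u ->
  let sg := (u*p+v*q)/rho in
  let c := u/rho in let s := v/rho in
  c^2 + s^2 = 1 /\ rho^2 - sg^2 = 1 /\
  c*(rho*u - sg*p) + s*(rho*v - sg*q) = 1 /\ c*(rho*v-sg*q) - s*(rho*u - sg*p) = 0 /\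
  c*(rho*p - sg*u) + s*(rho*q - sg*v) = 0 /\ c*(rho*q - sg*v) - s*(rho*p - sg*u) = 0.
Proof.
  intros Hr Hrr H1 H2 sg c s.
  assert (Hn : rho <> 0) by lra.
  assert (A : (u*p+v*q)^2 = rho^2*(p^2+q^2)).
  { transitivity ((u^2+v^2)*(p^2+q^2) - (u*q-v*p)^2); [ring|].
    replace (u*q - v*p) with 0 by lra. rewrite <- Hrr. ring. }
  assert (B : sg^2 = p^2+q^2).
  { unfold sg. replace (((u * p + v * q) / rho)^2) with ((u*p+v*q)^2 / rho^2) by (field; auto).
    rewrite A. field. auto. }
  unfold c, s; repeat split.
  - replace ((u/rho)^2 + (v/rho)^2) with ((u^2+v^2)/(rho*rho)) by (field; auto). rewrite <- Hrr. field; auto.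
  - rewrite B. replace (rho^2) with (rho*rho) by ring. lra.
  - transitivity ((u^2+v^2) - sg * ((u*p+v*q)/rho)); [field; auto|].
    fold sg. rewrite <- Hrr. replace (sg * sg) with (sg^2) by ring.
    replace (rho * rho - sg * sg) with (rho^2 - sg^2) by ring. rewrite B. replace (rho^2) with (rho*rho) by ring. lra.
  - transitivity (sg * (v*p - u*q) / rho); [field; auto|]. replace (v*p - u*q) with 0 by lra. field; auto.
  - transitivity ((u*p+v*q) - sg * (u^2+v^2) / rho); [field; auto|]. rewrite <- Hrr. unfold sg; field; auto.
  - transitivity (u*q - v*p); [field; auto|]. lra.
Qed.

Definition Kf (k : nat) (ch ps A3 W3 W4 W7 W8 : R -> R -> R) (t r : R) : R :=
  let c := cos (ch t r) in let s := sin (ch t r) in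
  let C := cosh (ps t r) in let S := sinh (ps t r) in
  let U := A3 t r * W3 t r in let V := A3 t r * W4 t r in
  let P := A3 t r * W7 t r in let Q := A3 t r * W8 t r in
  match k with
  | 1%nat => c*(C*U - S*P) + s*(C*V - S*Q)
  | 2%nat => c*(C*V-S*Q) - s*(C*U - S*P)
  | 3%nat => c*(C*P - S*U) + s*(C*Q - S*V)
  | _ => c*(C*Q - S*V) - s*(C*P - S*U)
  end.

Section M.
Variables (A1 A2 A3 W1 W2 W3 W4 W5 W6 W7 W8 : R -> R -> R).
Hypothesis (hA1 : smooth2 A1) (hA2 : smooth2 A2) (hA3 : smooth2 A3)
  (nA1 : forall t r, A1 t r <> 0) (nA2 : forall t r, A2 t r <> 0)
  (nA3 : forall t r, A3 t r <> 0)
  (hW1 : smooth2 W1) (hW2 : smooth2 W2) (hW3 : smooth2 W3) (hW4 : smooth2 W4)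
  (hW5 : smooth2 W5) (hW6 : smooth2 W6) (hW7 : smooth2 W7) (hW8 : smooth2 W8).
Hypothesis HE : Econd A1 A2 A3 W1 W2 W3 W4 W5 W6 W7 W8.

Ltac nz := repeat (match goal with
   | |- - _ <> 0 => apply Ropp_neq_0_compat
   | |- _ * _ <> 0 => apply Rmult_integral_contrapositive_currified end);
  first [ apply nA1 | apply nA2 | apply nA3 ].
Ltac side := match goal with
  | |- ex_derive (fun s => ?F s ?r) ?t => exact (edt F t r ltac:(assumption))
  | |- ex_derive (fun s => ?F ?t s) ?r => exact (edr F t r ltac:(assumption))
  | |- True => exact I
  | |- _ => nz
  end.
Ltac dv f x := erewrite (is_derive_unique f x); [| auto_derive; [repeat split; side | reflexivity]].

Lemma clos_chi t r : Derive (fun s => - (A1 t s * W1 t s)) r = Derive (fun s => - (A2 s r * W2 s r)) t.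
Proof.
  destruct HE as (e1 & _).
  dv (fun s => - (A1 t s * W1 t s)) r. dv (fun s => - (A2 s r * W2 s r)) t. rewrite e1. field. nz.
Qed.
Lemma clos_psi t r : Derive (fun s => - (A1 t s * W5 t s)) r = Derive (fun s => - (A2 s r * W6 s r)) t.
Proof.
  destruct HE as (_ & e1 & _).
  dv (fun s => - (A1 t s * W5 t s)) r. dv (fun s => - (A2 s r * W6 s r)) t. rewrite e1. field. nz.
Qed.

Variables (chi psi : R -> R -> R) (hchi : smooth2 chi) (hpsi : smooth2 psi).
Hypothesis Dchi : forall t r, is_derive (fun s => chi s r) t (- (A1 t r * W1 t r)) /\
    is_derive (fun s => chi t s) r (- (A2 t r * W2 t r)).
Hypothesis Dpsi : forall t r, is_derive (fun s => psi s r) t (- (A1 t r * W5 t r)) /\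
    is_derive (fun s => psi t s) r (- (A2 t r * W6 t r)).

Lemma dct t r : Derive (fun s => chi s r) t = - (A1 t r * W1 t r).
Proof. apply is_derive_unique, Dchi. Qed.
Lemma dcr t r : Derive (fun s => chi t s) r = - (A2 t r * W2 t r).
Proof. apply is_derive_unique, Dchi. Qed.
Lemma dpt t r : Derive (fun s => psi s r) t = - (A1 t r * W5 t r).
Proof. apply is_derive_unique, Dpsi. Qed.
Lemma dpr t r : Derive (fun s => psi t s) r = - (A2 t r * W6 t r).
Proof. apply is_derive_unique, Dpsi. Qed.

Lemma Kconst k : (k = 1 \/ k = 2 \/ k = 3 \/ k = 4)%nat -> forall t r,
  Kf k chi psi A3 W3 W4 W7 W8 t r = Kf k chi psi A3 W3 W4 W7 W8 0 0.
Proof.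
  destruct HE as (_ & _ & e3t & e4t & e7t & e8t & e3r & e4r & e7r & e8r & _).
  intros Hk. apply const2; intros t r;
  destruct Hk as [ -> | [ -> | [ -> | -> ]]]; unfold Kf, cosh, sinh; cbv zeta;
  (eapply is_derive_ext; [intros; reflexivity|]);
  auto_derive; try (repeat split; side);
  rewrite ?dct, ?dcr, ?dpt, ?dpr, ?e3t, ?e4t, ?e7t, ?e8t, ?e3r, ?e4r, ?e7r, ?e8r;
  field; nz.
Qed.
End M.

Theorem mainTheorem7 (A1 A2 A3 W1 W2 W3 W4 W5 W6 W7 W8 : R -> R -> R)
  (hA1 : smooth2 A1) (hA2 : smooth2 A2) (hA3 : smooth2 A3)
  (nA1 : forall t r, A1 t r <> 0) (nA2 : forall t r, A2 t r <> 0)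
  (nA3 : forall t r, A3 t r <> 0)
  (hW1 : smooth2 W1) (hW2 : smooth2 W2) (hW3 : smooth2 W3) (hW4 : smooth2 W4)
  (hW5 : smooth2 W5) (hW6 : smooth2 W6) (hW7 : smooth2 W7) (hW8 : smooth2 W8) :
  flat A1 A2 A3 W1 W2 W3 W4 W5 W6 W7 W8 <->
  exists chi psi : R -> R -> R,
    smooth2 chi /\ smooth2 psi /\
    forall t r : R,
      W1 t r = - dt chi t r / A1 t r /\
      W2 t r = - dr chi t r / A2 t r /\
      W3 t r = cosh (psi t r) * cos (chi t r) / A3 t r /\
      W4 t r = cosh (psi t r) * sin (chi t r) / A3 t r /\
      W5 t r = - dt psi t r / A1 t r /\
      W6 t r = - dr psi t r / A2 t r /\
      W7 t r = sinh (psi t r) * cos (chi t r) / A3 t r /\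
      W8 t r = sinh (psi t r) * sin (chi t r) / A3 t r.
Proof.
  split.
  - intros Hf.
    assert (HE : Econd A1 A2 A3 W1 W2 W3 W4 W5 W6 W7 W8) by (eapply E_of_flat; eauto).
    assert (HE' := HE).
    destruct HE' as (_ & _ & _ & _ & _ & _ & _ & _ & _ & _ & C1 & C2).
    assert (C1' : (A3 0 0 * W3 0 0)^2 + (A3 0 0 * W4 0 0)^2 - (A3 0 0 * W7 0 0)^2 - (A3 0 0 * W8 0 0)^2 = 1)
      by (rewrite <- (C1 0 0); ring).
    assert (C2' : (A3 0 0 * W7 0 0) * (A3 0 0 * W4 0 0) = (A3 0 0 * W8 0 0) * (A3 0 0 * W3 0 0))
      by (transitivity (A3 0 0 * A3 0 0 * (W7 0 0 * W4 0 0)); [ring|rewrite (C2 0 0); ring]).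
    set (u0 := A3 0 0 * W3 0 0) in *. set (v0 := A3 0 0 * W4 0 0) in *.
    set (p0 := A3 0 0 * W7 0 0) in *. set (q0 := A3 0 0 * W8 0 0) in *.
    set (rho := sqrt (u0^2 + v0^2)).
    assert (Hpos : 0 < u0^2 + v0^2) by nra.
    assert (Hrho : 0 < rho) by (apply sqrt_lt_R0; auto).
    assert (Hrr : rho * rho = u0^2 + v0^2) by (apply sqrt_sqrt; lra).
    pose proof (init_alg u0 v0 p0 q0 rho Hrho Hrr C1' C2') as HI. cbv zeta in HI.
    destruct HI as (Hcs0 & Hrs & K1e & K2e & K3e & K4e).
    destruct (angle (u0/rho) (v0/rho) Hcs0) as (th0 & Hc0 & Hs0).
    set (sg := (u0*p0+v0*q0)/rho) in *.
    destruct (integ (fun t r => - (A1 t r * W1 t r)) (fun t r => - (A2 t r * W2 t r)) th0)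
      as (chi & hchi & chi0 & Dchi).
    { apply sm_nprod; auto. } { apply sm_nprod; auto. }
    { intros t r. eapply clos_chi; eauto. }
    destruct (integ (fun t r => - (A1 t r * W5 t r)) (fun t r => - (A2 t r * W6 t r)) (arcsinh sg))
      as (psi & hpsi & psi0 & Dpsi).
    { apply sm_nprod; auto. } { apply sm_nprod; auto. }
    { intros t r. eapply clos_psi; eauto. }
    assert (HS0 : sinh (psi 0 0) = sg) by (rewrite psi0; apply sinh_arcsinh).
    assert (HC0 : cosh (psi 0 0) = rho).
    { assert (H1 := cosh_sinh (psi 0 0)). rewrite HS0 in H1.
      assert (H2 := cosh_pos (psi 0 0)).
      assert (H3 : (cosh (psi 0 0) - rho) * (cosh (psi 0 0) + rho) = 0) by nra.
      apply Rmult_integral in H3; destruct H3; lra. }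
    exists chi, psi. split; [auto|split; [auto|]]. intros t r.
    assert (HK : forall k, (k = 1 \/ k = 2 \/ k = 3 \/ k = 4)%nat ->
       Kf k chi psi A3 W3 W4 W7 W8 t r = Kf k chi psi A3 W3 W4 W7 W8 0 0)
      by (intros; eapply Kconst; eauto).
    assert (K1 := HK 1%nat ltac:(lia)). assert (K2 := HK 2%nat ltac:(lia)).
    assert (K3 := HK 3%nat ltac:(lia)). assert (K4 := HK 4%nat ltac:(lia)).
    unfold Kf in K1, K2, K3, K4; cbv zeta in K1, K2, K3, K4.
    rewrite chi0, Hc0, Hs0, HC0, HS0 in K1, K2, K3, K4.
    fold u0 v0 p0 q0 in K1, K2, K3, K4.
    rewrite K1e in K1. rewrite K2e in K2. rewrite K3e in K3. rewrite K4e in K4.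
    assert (Hcs : cos (chi t r) ^ 2 + sin (chi t r) ^ 2 = 1)
      by (assert (H := sin2_cos2 (chi t r)); unfold Rsqr in H; nra).
    destruct (alg _ _ _ _ _ _ _ _ Hcs (cosh_sinh (psi t r)) K1 K2 K3 K4) as (eU & eV & eP & eQ).
    assert (dct : Derive (fun s => chi s r) t = - (A1 t r * W1 t r)) by (apply is_derive_unique, Dchi).
    assert (dcr : Derive (fun s => chi t s) r = - (A2 t r * W2 t r)) by (apply is_derive_unique, Dchi).
    assert (dpt : Derive (fun s => psi s r) t = - (A1 t r * W5 t r)) by (apply is_derive_unique, Dpsi).
    assert (dpr : Derive (fun s => psi t s) r = - (A2 t r * W6 t r)) by (apply is_derive_unique, Dpsi).
    unfold dt, dr. rewrite dct, dcr, dpt, dpr.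
    assert (a3 := nA3 t r).
    repeat split; try (field; auto).
    + rewrite <- eU; field; auto.
    + rewrite <- eV; field; auto.
    + rewrite <- eP; field; auto.
    + rewrite <- eQ; field; auto.
  - intros (chi & psi & hchi & hpsi & HW).
    apply flat_of_E; auto.
    eapply (E_of_chi _ _ _ _ _ _ _ _ _ _ _ chi psi); eauto.
Qed.
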